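(* Under the standing assumptions, $\sum_{n\eta_2\le S\le n\eta_3}\Phi(S)=o(1)$ as $n\to\infty$, the sum being over integers $S$.
   Context: Parameters: integer $k\ge2$, constants $\alpha>0$, $r>0$, $0<p<1$; $d=n^{\alpha}$ (treated as an integer), $m=n\ln d$, $\tau=\frac1{1-p}$, $r_{cr}=\frac1{\ln\tau}$. Standing assumptions: $(2k-1)\alpha>1$, $k\alpha\le1$, $k\ge\frac{\tau\ln\tau}{\tau-1}$, and $r<r_{cr}$. Notation: $f(s)=1+\frac{p}{1-p}\cdot\frac{s^k-d^{-k}}{1-d^{-k}}$ for $s\in[0,1]$; $B(S)=\binom{n}{S}\left(\frac1d\right)^{S}\left(1-\frac1d\right)^{n-S}$; $W(S)=f(S/n)^{rm}$; $\Phi(S)=B(S)W(S)$. Let $\alpha_0=\frac{(2k-1)\alpha-1}{2(k-1)}$, and let $\eta_2,\eta_3,\mu$ be constants with $0<\eta_2<\eta_3<1$, $\alpha_0/\alpha-\mu\eta_2^{k-1}>0$, $\mu>\frac{kpr}{1-p}$, and $r\ln(1-p)+\eta_3>0$. *)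

(* Defs.v *)
From Stdlib Require Import Reals Lra.
From Coquelicot Require Import Coquelicot.
Open Scope R_scope.

(* d = n^alpha "treated as an integer": we take d = floor(n^alpha). *)
Definition dd (alpha : R) (n : nat) : R :=
  IZR (Int_part (Rpower (INR n) alpha)).

Definition mm (alpha : R) (n : nat) : R := INR n * ln (dd alpha n).

Definition ff (k : nat) (alpha p : R) (n : nat) (s : R) : R :=
  1 + p / (1 - p) * ((s ^ k - / (dd alpha n) ^ k) / (1 - / (dd alpha n) ^ k)).

Definition BB (alpha : R) (n S : nat) : R :=
  Binomial.C n S * (/ dd alpha n) ^ S * (1 - / dd alpha n) ^ (n - S).

Definition WW (k : nat) (alpha r p : R) (n S : nat) : R :=
  Rpower (ff k alpha p n (INR S / INR n)) (r * mm alpha n).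

Definition Phi (k : nat) (alpha r p : R) (n S : nat) : R :=
  BB alpha n S * WW k alpha r p n S.

(* sum of Phi(S) over integers S with n*eta2 <= S <= n*eta3; since
   0 < eta2 < eta3 < 1 all such S lie in 0..n *)
Definition PhiSum (k : nat) (alpha r p eta2 eta3 : R) (n : nat) : R :=
  sum_n (fun S =>
    if Rle_dec (INR n * eta2) (INR S) then
      if Rle_dec (INR S) (INR n * eta3) then Phi k alpha r p n S else 0
    else 0) n.

(* Main.v *)
Require Import Defs.
From Stdlib Require Import Reals Lra Lia.
From Coquelicot Require Import Coquelicot.
Open Scope R_scope.

Lemma ln1p_le x : 0 <= x -> ln (1 + x) <= x.
Proof.
  intro Hx. rewrite <- (ln_exp x) at 2. apply ln_le; [lra|apply exp_ineq1_le].
Qed.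

Lemma q_mono u U : 0 < u -> u <= U ->
  (1 + u) * ln (1 + u) / u <= (1 + U) * ln (1 + U) / U.
Proof.
  intros Hu HuU. destruct (Req_dec u U) as [->|Hne]; [lra|].
  assert (Hlt: u < U) by lra.
  destruct (MVT_cor2 (fun x => (1 + x) * ln (1 + x) / x)
     (fun x => (x - ln (1 + x)) / x ^ 2) u U Hlt) as [c [Hc Hcb]].
  { intros c Hc. apply is_derive_Reals.
    auto_derive; [lra|]. field. lra. }
  assert (0 <= (c - ln (1 + c)) / c ^ 2 * (U - u)).
  { apply Rmult_le_pos; [|lra]. apply Rdiv_le_0_compat.
    - pose proof (ln1p_le c). lra.
    - apply pow_lt; lra. }
  lra.
Qed.

Lemma phi_nonneg (T kk u : R) : 1 < T -> kk >= T * ln T / (T - 1) ->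
  0 < u -> u <= T - 1 -> (1 + u) * ln (1 + u) <= kk * u.
Proof.
  intros HT Hk Hu HuT.
  pose proof (q_mono u (T - 1) Hu HuT) as H.
  replace (1 + (T - 1)) with T in H by ring.
  assert (H2 : (1 + u) * ln (1 + u) / u <= kk) by lra.
  apply Rmult_le_compat_r with (r := u) in H2; [|lra].
  unfold Rdiv in H2. rewrite Rmult_assoc, Rinv_l in H2; lra.
Qed.

Lemma key_ineq (T : R) (k : nat) (s : R) : 1 < T -> (1 <= k)%nat ->
  INR k >= T * ln T / (T - 1) -> 0 < s -> s <= 1 ->
  ln (1 + (T - 1) * s ^ k) <= s * ln T.
Proof.
  intros HT Hk1 Hk Hs Hs1.
  destruct (Req_dec s 1) as [->|Hne].
  { rewrite pow1. replace (1 + (T-1)*1) with T by ring. lra. }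
  assert (Hlt : s < 1) by lra.
  destruct (MVT_cor2 (fun x => ln (1 + (T - 1) * x ^ k) / x)
     (fun x => (INR k * (T - 1) * x ^ (k - 1) / (1 + (T - 1) * x ^ k) * x
                 - ln (1 + (T - 1) * x ^ k)) / x ^ 2) s 1 Hlt) as [c [Hc Hcb]].
  { intros c Hc. apply is_derive_Reals.
    assert (0 < c ^ k) by (apply pow_lt; lra).
    assert (0 < (T - 1) * c ^ k) by (apply Rmult_lt_0_compat; lra).
    auto_derive; [repeat split; lra|].
    replace (Nat.pred k) with (k - 1)%nat by lia. field. split; lra. }
  assert (Hc0 : 0 < c) by lra.
  set (u := (T - 1) * c ^ k).
  assert (Hu : 0 < u) by (apply Rmult_lt_0_compat; [lra|apply pow_lt; lra]).
  assert (HuT : u <= T - 1).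
  { unfold u. rewrite <- (Rmult_1_r (T-1)) at 2. apply Rmult_le_compat_l; [lra|].
    rewrite <- (pow1 k). apply pow_incr; split; lra. }
  pose proof (phi_nonneg T (INR k) u HT Hk Hu HuT) as Hphi.
  assert (Heq : INR k * (T - 1) * c ^ (k - 1) / (1 + u) * c
      = INR k * u / (1 + u)).
  { unfold u. assert (Hp : c ^ k = c ^ (k - 1) * c).
    { rewrite <- (pow_1 c) at 3. rewrite <- pow_add. f_equal. lia. }
    unfold u in Hu. rewrite Hp in Hu |- *. field. lra. }
  fold u in Hc. rewrite Heq in Hc.
  assert (0 <= (INR k * u / (1 + u) - ln (1 + u)) / c ^ 2 * (1 - s)).
  { apply Rmult_le_pos; [|lra]. apply Rdiv_le_0_compat; [|apply pow_lt; lra].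
    assert (ln (1 + u) <= INR k * u / (1 + u)).
    { apply Rmult_le_reg_r with (r := 1 + u); [lra|].
      unfold Rdiv. rewrite Rmult_assoc, Rinv_l; lra. }
    lra. }
  rewrite pow1 in Hc. replace (1 + (T-1)*1) with T in Hc by ring.
  assert (Hh : ln (1 + (T - 1) * s ^ k) / s <= ln T) by lra.
  apply Rmult_le_compat_r with (r := s) in Hh; [|lra].
  unfold Rdiv in Hh. rewrite Rmult_assoc, Rinv_l in Hh; lra.
Qed.
Lemma exple x y : x <= y -> exp x <= exp y.
Proof. intro H. destruct (Rle_lt_or_eq_dec _ _ H) as [H1|H1]; [left; apply exp_increasing; auto|rewrite H1; lra]. Qed.

Lemma sum_f_R0_ge (f : nat -> R) (i N : nat) : (forall j, 0 <= f j) -> (i <= N)%nat ->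
  f i <= sum_f_R0 f N.
Proof.
  intros Hf Hi. induction N.
  - assert (i = 0%nat) by lia. subst. simpl. lra.
  - destruct (Nat.eq_dec i (S N)) as [->|Hne].
    + simpl. pose proof (cond_pos_sum f N Hf). lra.
    + simpl. pose proof (Hf (S N)). assert (i <= N)%nat by lia. specialize (IHN H0). lra.
Qed.

Lemma C_nonneg n i : 0 <= Binomial.C n i.
Proof.
  unfold Binomial.C. apply Rlt_le, Rdiv_lt_0_compat; [apply INR_fact_lt_0|].
  apply Rmult_lt_0_compat; apply INR_fact_lt_0.
Qed.

Lemma C_le n i : (i <= n)%nat -> Binomial.C n i <= 2 ^ n.
Proof.
  intro Hi. replace 2 with (1 + 1) by ring. rewrite binomial.
  eapply Rle_trans; [|apply (sum_f_R0_ge (fun i0 => Binomial.C n i0 * 1 ^ i0 * 1 ^ (n - i0)) i n); [|exact Hi]].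
  - simpl. rewrite !pow1. lra.
  - intro j. rewrite !pow1. pose proof (C_nonneg n j). lra.
Qed.

Lemma d_large alpha K : 0 < alpha -> exists N, forall n, (N <= n)%nat -> exp K <= dd alpha n.
Proof.
  intros Ha.
  set (K2 := ln (exp K + 1)).
  destruct (INR_unbounded (exp (K2 / alpha))) as [N HN].
  exists N. intros n Hn.
  assert (HnN : INR N <= INR n) by (apply le_INR; auto).
  assert (Hpos : 0 < INR n) by (pose proof (exp_pos (K2/alpha)); lra).
  assert (Hln : K2 / alpha <= ln (INR n)).
  { rewrite <- (ln_exp (K2/alpha)). apply ln_le; [apply exp_pos|lra]. }
  assert (HR : exp K + 1 <= Rpower (INR n) alpha).
  { unfold Rpower. replace (exp K + 1) with (exp K2).
    - apply exple. apply (Rmult_le_compat_l alpha) in Hln; [|lra].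
      replace (alpha * (K2 / alpha)) with K2 in Hln by (field; lra). lra.
    - unfold K2. rewrite exp_ln; [auto|]. pose proof (exp_pos K); lra. }
  unfold dd. pose proof (base_Int_part (Rpower (INR n) alpha)). lra.
Qed.

Lemma term_bound (k : nat) (alpha r p eta2 eta3 : R) (n S : nat) :
  (1 <= k)%nat -> 0 < r -> 0 < p -> p < 1 ->
  INR k >= (/ (1 - p)) * ln (/ (1 - p)) / (/ (1 - p) - 1) ->
  r < / ln (/ (1 - p)) -> 0 < eta2 -> eta3 < 1 -> 0 < INR n ->
  1 < dd alpha n -> / eta2 <= dd alpha n ->
  INR n * eta2 <= INR S -> INR S <= INR n * eta3 ->
  0 <= Phi k alpha r p n S /\
  Phi k alpha r p n S <= exp (INR n * (ln 2 - ln (dd alpha n) * (eta2 * (1 - r * ln (/ (1 - p)))))).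
Proof.
  intros Hk Hr Hp0 Hp1 HkT HrT He2 He3 Hn HD1 HDe HS1 HS2.
  set (T := / (1 - p)) in *.
  set (D := dd alpha n) in *.
  assert (HT : 1 < T).
  { unfold T. rewrite <- Rinv_1. apply Rinv_lt_contravar; lra. }
  assert (HlnT : 0 < ln T) by (rewrite <- ln_1; apply ln_increasing; lra).
  assert (HrlnT : r * ln T < 1).
  { apply (Rmult_lt_compat_r (ln T)) in HrT; [|lra].
    rewrite Rinv_l in HrT; lra. }
  assert (HSn : (S < n)%nat).
  { apply INR_lt. assert (INR n * eta3 < INR n) by nra. lra. }
  set (s := INR S / INR n).
  assert (HSs : INR S = INR n * s) by (unfold s; field; lra).
  assert (Hs1 : eta2 <= s).
  { unfold s. apply Rmult_le_reg_r with (r := INR n); [lra|].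
    unfold Rdiv. rewrite Rmult_assoc, Rinv_l; lra. }
  assert (Hs2 : s <= 1).
  { unfold s. apply Rmult_le_reg_r with (r := INR n); [lra|].
    unfold Rdiv. rewrite Rmult_assoc, Rinv_l; [|lra]. assert (INR n * eta3 < INR n) by nra. lra. }
  assert (HD0 : 0 < D) by lra.
  assert (HL : 0 < ln D) by (rewrite <- ln_1; apply ln_increasing; lra).
  assert (HiD : 0 < / D < 1).
  { split; [apply Rinv_0_lt_compat; lra|]. rewrite <- Rinv_1. apply Rinv_lt_contravar; lra. }
  assert (HB0 : 0 <= BB alpha n S).
  { unfold BB. fold D. apply Rmult_le_pos; [apply Rmult_le_pos|]; [apply C_nonneg| |];
    apply pow_le; lra. }
  assert (HB1 : BB alpha n S <= 2 ^ n * (/ D) ^ S).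
  { unfold BB. fold D.
    assert (H1 : (1 - / D) ^ (n - S) <= 1).
    { apply Rle_trans with (1 ^ (n - S)); [apply pow_incr; split; lra|rewrite pow1; lra]. }
    assert (H2 : 0 <= (/ D) ^ S) by (apply pow_le; lra).
    pose proof (C_le n S ltac:(lia)). pose proof (C_nonneg n S).
    assert (H3 : 0 <= (1 - / D) ^ (n - S)) by (apply pow_le; lra).
    assert (Binomial.C n S * (/ D) ^ S <= 2 ^ n * (/ D) ^ S) by (apply Rmult_le_compat_r; lra).
    assert (Binomial.C n S * (/ D) ^ S * (1 - / D) ^ (n - S) <= Binomial.C n S * (/ D) ^ S * 1).
    { apply Rmult_le_compat_l; [apply Rmult_le_pos|]; lra. }
    lra. }
  set (e := / D ^ k).
  assert (HDk : 1 < D ^ k) by (apply Rlt_pow_R1; [lra|lia]).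
  assert (He : 0 < e < 1).
  { unfold e. split; [apply Rinv_0_lt_compat; lra|]. rewrite <- Rinv_1. apply Rinv_lt_contravar; lra. }
  assert (Hsk : e <= s ^ k).
  { unfold e. rewrite <- pow_inv. apply pow_incr. split; [lra|].
    apply Rle_trans with eta2; [|lra].
    rewrite <- (Rinv_inv eta2). apply Rinv_le_contravar; [apply Rinv_0_lt_compat; lra|lra]. }
  assert (Hsk1 : s ^ k <= 1) by (rewrite <- (pow1 k); apply pow_incr; split; lra).
  assert (HX0 : 0 <= (s ^ k - e) / (1 - e)) by (apply Rdiv_le_0_compat; lra).
  assert (HX1 : (s ^ k - e) / (1 - e) <= s ^ k).
  { apply Rmult_le_reg_r with (r := 1 - e); [lra|].
    unfold Rdiv. rewrite Rmult_assoc, Rinv_l; [|lra]. nra. }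
  assert (HpT : p / (1 - p) = T - 1) by (unfold T; field; lra).
  assert (Hf1 : 1 <= ff k alpha p n s).
  { unfold ff. fold D. fold e. rewrite HpT. nra. }
  assert (Hf2 : ff k alpha p n s <= 1 + (T - 1) * s ^ k).
  { unfold ff. fold D. fold e. rewrite HpT. nra. }
  assert (Hs0 : 0 < s) by lra.
  pose proof (key_ineq T k s HT Hk HkT Hs0 Hs2) as Hkey.
  assert (Hlnf : ln (ff k alpha p n s) <= s * ln T).
  { eapply Rle_trans; [|exact Hkey]. apply ln_le; lra. }
  assert (Hlnf0 : 0 <= ln (ff k alpha p n s)).
  { rewrite <- ln_1. apply ln_le; lra. }
  assert (HW : WW k alpha r p n S <= exp (r * (INR n * ln D) * (s * ln T))).
  { unfold WW, Rpower, mm. fold D. fold s. apply exple.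
    apply Rmult_le_compat_l; [|exact Hlnf]. apply Rmult_le_pos; [lra|].
    apply Rmult_le_pos; lra. }
  assert (HW0 : 0 <= WW k alpha r p n S) by (unfold WW, Rpower; left; apply exp_pos).
  split.
  - unfold Phi. apply Rmult_le_pos; lra.
  - unfold Phi.
    assert (E2 : 2 ^ n = exp (INR n * ln 2)).
    { rewrite <- ln_pow; [|lra]. rewrite exp_ln; [auto|]. apply pow_lt; lra. }
    assert (ED : (/ D) ^ S = exp (INR S * - ln D)).
    { rewrite <- ln_Rinv; [|lra]. rewrite <- ln_pow; [|lra]. rewrite exp_ln; [auto|]. apply pow_lt; lra. }
    rewrite E2, ED in HB1.
    eapply Rle_trans.
    { apply Rmult_le_compat; [exact HB0|exact HW0|exact HB1|exact HW]. }
    rewrite <- !exp_plus. apply exple. rewrite HSs.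
    assert (ln D * (eta2 * (1 - r * ln T)) <= ln D * (s * (1 - r * ln T))).
    { apply Rmult_le_compat_l; [lra|]. apply Rmult_le_compat_r; lra. }
    assert (INR n * (ln D * (eta2 * (1 - r * ln T))) <= INR n * (ln D * (s * (1 - r * ln T)))).
    { apply Rmult_le_compat_l; lra. }
    nra.
Qed.

Lemma exp_neg_pow n : exp (- INR n) = exp (-1) ^ n.
Proof.
  induction n.
  - simpl. rewrite Ropp_0, exp_0. auto.
  - rewrite S_INR. simpl. rewrite <- IHn, <- exp_plus. f_equal. ring.
Qed.

Theorem lemma4p9 (k : nat) (alpha r p eta2 eta3 mu : R) :
  (2 <= k)%nat ->
  0 < alpha -> 0 < r -> 0 < p -> p < 1 ->
  (2 * INR k - 1) * alpha > 1 ->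
  INR k * alpha <= 1 ->
  INR k >= (/ (1 - p)) * ln (/ (1 - p)) / (/ (1 - p) - 1) ->
  r < / ln (/ (1 - p)) ->
  0 < eta2 -> eta2 < eta3 -> eta3 < 1 ->
  ((2 * INR k - 1) * alpha - 1) / (2 * (INR k - 1)) / alpha
    - mu * eta2 ^ (k - 1) > 0 ->
  mu > INR k * p * r / (1 - p) ->
  r * ln (1 - p) + eta3 > 0 ->
  is_lim_seq (fun n => PhiSum k alpha r p eta2 eta3 n) 0.
Proof.
  intros Hk2 Ha Hr Hp0 Hp1 _ _ HkT HrT He2 He23 He3 _ _ _.
  assert (HT : 1 < / (1 - p)).
  { rewrite <- Rinv_1. apply Rinv_lt_contravar; lra. }
  assert (HlnT : 0 < ln (/ (1 - p))) by (rewrite <- ln_1; apply ln_increasing; lra).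
  assert (HrlnT : r * ln (/ (1 - p)) < 1).
  { apply (Rmult_lt_compat_r (ln (/ (1 - p)))) in HrT; [|lra].
    rewrite Rinv_l in HrT; lra. }
  set (c := eta2 * (1 - r * ln (/ (1 - p)))).
  assert (Hc : 0 < c) by (unfold c; apply Rmult_lt_0_compat; lra).
  set (K := Rmax (Rmax ((ln 2 + 2) / c) (ln (/ eta2))) 1).
  assert (HK1 : (ln 2 + 2) / c <= K) by (unfold K; eapply Rle_trans; [apply Rmax_l|apply Rmax_l]).
  assert (HK2 : ln (/ eta2) <= K) by (unfold K; eapply Rle_trans; [apply Rmax_r|apply Rmax_l]).
  assert (HK3 : 1 <= K) by (unfold K; apply Rmax_r).
  destruct (d_large alpha K Ha) as [N HN].
  apply is_lim_seq_le_le_loc with (u := fun _ => 0) (w := fun n => exp (- INR n)).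
  2: apply is_lim_seq_const.
  2: { apply is_lim_seq_ext with (u := fun n => exp (-1) ^ n).
       - intro n. symmetry. apply exp_neg_pow.
       - apply is_lim_seq_geom. rewrite Rabs_pos_eq; [|left; apply exp_pos].
         rewrite <- exp_0. apply exp_increasing. lra. }
  exists (max N 1). intros n Hn.
  assert (HDK : exp K <= dd alpha n) by (apply HN; lia).
  assert (Hn0 : 0 < INR n) by (apply lt_0_INR; lia).
  assert (He1 : exp 1 <= exp K) by (apply exple; lra).
  assert (Hexp1 : 1 < exp 1) by (pose proof (exp_ineq1_le 1); lra).
  assert (HD1 : 1 < dd alpha n) by lra.
  assert (HDe : / eta2 <= dd alpha n).
  { rewrite <- (exp_ln (/ eta2)); [|apply Rinv_0_lt_compat; lra].
    eapply Rle_trans; [apply exple, HK2|exact HDK]. }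
  assert (HlnD : K <= ln (dd alpha n)).
  { rewrite <- (ln_exp K). apply ln_le; [apply exp_pos|exact HDK]. }
  assert (Hterm : forall S, INR n * eta2 <= INR S -> INR S <= INR n * eta3 ->
     0 <= Phi k alpha r p n S <= exp (- (2 * INR n))).
  { intros S H1 H2.
    destruct (term_bound k alpha r p eta2 eta3 n S ltac:(lia) Hr Hp0 Hp1 HkT HrT He2 He3 Hn0 HD1 HDe H1 H2) as [B0 B1].
    split; [exact B0|]. eapply Rle_trans; [exact B1|]. apply exple. fold c.
    assert (Hc2 : ln 2 + 2 <= K * c).
    { apply (Rmult_le_compat_r c) in HK1; [|lra].
      unfold Rdiv in HK1. rewrite Rmult_assoc, Rinv_l in HK1; lra. }
    assert (K * c <= ln (dd alpha n) * c) by (apply Rmult_le_compat_r; lra).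
    assert (INR n * (ln 2 - ln (dd alpha n) * c) <= INR n * (-2)) by (apply Rmult_le_compat_l; lra).
    lra. }
  assert (Hg : forall S, 0 <= (if Rle_dec (INR n * eta2) (INR S) then
      if Rle_dec (INR S) (INR n * eta3) then Phi k alpha r p n S else 0 else 0) <= exp (- (2 * INR n))).
  { intro S. pose proof (exp_pos (- (2 * INR n))).
    destruct (Rle_dec (INR n * eta2) (INR S)); [|lra].
    destruct (Rle_dec (INR S) (INR n * eta3)); [|lra]. apply Hterm; auto. }
  unfold PhiSum, sum_n. split.
  - eapply Rle_trans; [|apply sum_n_m_le; intro S; apply (Hg S)].
    rewrite sum_n_m_const. lra.
  - eapply Rle_trans; [apply sum_n_m_le; intro S; apply (Hg S)|].
    rewrite sum_n_m_const. rewrite Nat.sub_0_r, S_INR.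
    pose proof (exp_ineq1_le (INR n)).
    assert ((INR n + 1) * exp (- (2 * INR n)) <= exp (INR n) * exp (- (2 * INR n))).
    { apply Rmult_le_compat_r; [left; apply exp_pos|lra]. }
    rewrite <- exp_plus in H0. replace (INR n + - (2 * INR n)) with (- INR n) in H0 by ring.
    lra.
Qed.
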